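(* Let $G$ be a simple connected graph and let $v$ be a real eigenvector of $\mathcal M$ with $\mathcal Mv=\mu v$, $\mu>0$. Let $S=\{i: v_i\ge0\}$ and let $\theta\in[0,\pi/2)$ be the angle between $|v|=(|v_1|,\dots,|v_n|)^{\mathsf T}$ and $\delta$, i.e. $\cos\theta=\delta^{\mathsf T}|v|/(\|v\|_2\|\delta\|_2)$. If $$\mu+1>4\,\frac{\mathrm{vol}\, S\,\mathrm{vol}\, \bar S}{(\mathrm{vol}\, V)^2}\,\frac{1}{\cos^2\theta},$$ then $Q(S)>0$.
   Context: $G=(V,E)$ is a finite, undirected, unweighted, simple connected graph with adjacency matrix $A$, degrees $d_i$, $D=\mathrm{Diag}(d_i)$, $\delta=(\sqrt{d_1},\dots,\sqrt{d_n})^{\mathsf T}$, $\mathrm{vol}\, S=\sum_{i\in S}d_i$, $\bar S=V\setminus S$, $\mathbb 1_S$ the characteristic vector of $S$. $\mathcal M=D^{-1/2}AD^{-1/2}-\frac{1}{\mathrm{vol}\, V}\delta\delta^{\mathsf T}$. The modularity of $S$ is $Q(S)=\mathbb 1_S^{\mathsf T}A\mathbb 1_S-(\mathrm{vol}\, S)^2/\mathrm{vol}\, V$. *)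

(* Defs.v *)
From HB Require Import structures.
From mathcomp Require Import all_boot all_order all_algebra.
Set Implicit Arguments. Unset Strict Implicit. Unset Printing Implicit Defensive.
Import Order.TTheory GRing.Theory Num.Theory.
Local Open Scope ring_scope.

Section Modularity.
Variables (R : rcfType) (n : nat) (e : rel 'I_n).

Definition adjmx : 'M[R]_n := \matrix_(i, j) (e i j)%:R.
Definition deg (i : 'I_n) : R := \sum_j adjmx i j.
Definition vol (S : {set 'I_n}) : R := \sum_(i in S) deg i.
Definition volV : R := vol [set: 'I_n].
Definition delta : 'cV[R]_n := \col_i Num.sqrt (deg i).
Definition Dmhalf : 'M[R]_n := \matrix_(i, j) (if i == j then (Num.sqrt (deg i))^-1 else 0).
Definition modmx : 'M[R]_n :=
  Dmhalf *m adjmx *m Dmhalf - (volV)^-1 *: (delta *m delta^T).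
Definition charvec (S : {set 'I_n}) : 'cV[R]_n := \col_i (i \in S)%:R.
Definition modularity (S : {set 'I_n}) : R :=
  ((charvec S)^T *m adjmx *m charvec S) 0 0 - (vol S) ^+ 2 / volV.
Definition norm2 (v : 'cV[R]_n) : R := Num.sqrt (\sum_i (v i 0) ^+ 2).
Definition absv (v : 'cV[R]_n) : 'cV[R]_n := map_mx Num.norm v.
Definition costheta (v : 'cV[R]_n) : R :=
  (delta^T *m absv v) 0 0 / (norm2 v * norm2 delta).
End Modularity.

Definition simple_connected (n : nat) (e : rel 'I_n) : Prop :=
  symmetric e /\ irreflexive e /\ (forall x y, connect e x y).

(* Main.v *)
Require Import Defs.
From HB Require Import structures.
From mathcomp Require Import all_boot all_order all_algebra.
From mathcomp Require Import ring lra zify.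
Import Order.TTheory GRing.Theory Num.Theory.
Local Open Scope ring_scope.
Set Implicit Arguments. Unset Strict Implicit. Unset Printing Implicit Defensive.
Section Abs.
Variables (R : rcfType) (n : nat) (A : 'I_n -> 'I_n -> R) (s : 'I_n -> R).
Hypothesis hsym : forall i j, A i j = A j i.
Hypothesis hA0 : forall i j, 0 <= A i j.
Hypothesis hs : forall i, 0 < s i.
Hypothesis hd : forall i, s i ^+ 2 = \sum_j A i j.
Local Notation W := (\sum_i s i ^+ 2).
Hypothesis hW : 0 < W.

Definition PP i j := A i j / (s i * s j) - s i * s j / W + (i == j)%:R.
Definition Pv (x : 'I_n -> R) i := \sum_j PP i j * x j.
Definition qf x := \sum_i x i * Pv x i.

Lemma sneq i : s i != 0. Proof. by rewrite gt_eqF. Qed.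

Lemma sumA_l (f : 'I_n -> R) : \sum_i \sum_j A i j * f i = \sum_i s i ^+ 2 * f i.
Proof. by apply: eq_bigr => i _; rewrite -mulr_suml -hd. Qed.

Lemma sumA_r (f : 'I_n -> R) : \sum_i \sum_j A i j * f j = \sum_j s j ^+ 2 * f j.
Proof.
rewrite exchange_big /= -sumA_l; apply: eq_bigr => j _; apply: eq_bigr => i _.
by rewrite hsym.
Qed.

Lemma PPsym i j : PP i j = PP j i.
Proof. by rewrite /PP hsym (mulrC (s i)) eq_sym. Qed.

Lemma Pv_swap x y : \sum_i x i * Pv y i = \sum_i y i * Pv x i.
Proof.
rewrite /Pv.
under eq_bigr => i _ do rewrite mulr_sumr.
under [RHS]eq_bigr => i _ do rewrite mulr_sumr.
rewrite exchange_big /=; apply: eq_bigr => j _; apply: eq_bigr => i _.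
by rewrite PPsym; ring.
Qed.

Lemma Pv_expand x i : Pv x i =
  (\sum_j A i j * (x j / s j)) / s i - s i * (\sum_j s j * x j) / W + x i.
Proof.
rewrite /Pv /PP.
under eq_bigr => j _ do rewrite mulrDl mulrBl.
rewrite big_split sumrB /=.
congr (_ - _ + _).
- rewrite mulr_suml; apply: eq_bigr => j _.
  have := sneq i; have := sneq j => h1 h2; field.
  by rewrite h1 h2.
- rewrite mulr_sumr mulr_suml; apply: eq_bigr => j _.
  have := hW; rewrite lt0r => /andP [h _]; field; exact h.
- rewrite (bigD1 i) //= eqxx mul1r big1 ?addr0 // => j /negbTE.
  by rewrite eq_sym => ->; rewrite mul0r.
Qed.

Lemma Wneq : W != 0. Proof. by rewrite gt_eqF. Qed.

Lemma psd x : 0 <= qf x.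
Proof.
pose w := fun j => x j / s j.
pose X := \sum_j s j * x j.
pose c := X / W.
pose Q := \sum_i w i * (\sum_j A i j * w j).
have h1 : qf x = Q - X ^+ 2 / W + \sum_i x i ^+ 2.
  rewrite /qf.
  transitivity (\sum_i (w i * (\sum_j A i j * w j) - (s i * x i) * (X / W) + x i ^+ 2)).
    apply: eq_bigr => i _; rewrite Pv_expand /w /X.
    have := sneq i; have := Wneq => h1 h2; field; by rewrite h1 h2.
  rewrite big_split sumrB /= -mulr_suml /Q /X; congr (_ - _ + _).
  by rewrite expr2 mulrA.
have h2 : 0 <= \sum_i \sum_j A i j * (w i + w j - 2 * c) ^+ 2.
  by apply: sumr_ge0 => i _; apply: sumr_ge0 => j _; rewrite mulr_ge0 // sqr_ge0.
have h3 : \sum_i \sum_j A i j * (w i + w j - 2 * c) ^+ 2 =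
   \sum_i \sum_j A i j * (w i ^+ 2 - 4 * c * w i + 2 * c ^+ 2) +
   \sum_i \sum_j A i j * (w j ^+ 2 - 4 * c * w j + 2 * c ^+ 2) +
   2 * Q.
  rewrite /Q mulr_sumr -!big_split /=; apply: eq_bigr => i _.
  rewrite mulr_sumr mulr_sumr -!big_split /=; apply: eq_bigr => j _; ring.
rewrite sumA_l sumA_r in h3.
have h4 : \sum_i s i ^+ 2 * (w i ^+ 2 - 4 * c * w i + 2 * c ^+ 2) =
   \sum_i x i ^+ 2 - 4 * c * X + 2 * c ^+ 2 * W.
  rewrite /X !mulr_sumr -sumrB -big_split /=; apply: eq_bigr => i _.
  rewrite /w; have := sneq i => hi; field; exact hi.
rewrite h4 in h3.
have h5 : c * X = X ^+ 2 / W by rewrite /c; field; exact Wneq.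
have h6 : c ^+ 2 * W = X ^+ 2 / W by rewrite /c; field; exact Wneq.
have h7 : 0 <= X ^+ 2 / W by rewrite divr_ge0 // ?sqr_ge0 // ltW.
rewrite h1; lra.
Qed.

Lemma CS (lam : R) v y : (forall i, Pv v i = lam * v i) -> 0 < \sum_i v i ^+ 2 ->
  lam * (\sum_i v i * y i) ^+ 2 <= (\sum_i v i ^+ 2) * qf y.
Proof.
move=> hv hN.
set N := \sum_i v i ^+ 2 in hN *.
set B := \sum_i v i * y i.
pose t := B / N.
pose z := fun i => y i - t * v i.
have hz : forall i, Pv z i = Pv y i - t * (lam * v i).
  move=> i; rewrite -hv /Pv mulr_sumr -sumrB; apply: eq_bigr => j _; rewrite /z; ring.
have hsw : \sum_i v i * Pv y i = lam * B.
  rewrite Pv_swap /B mulr_sumr; apply: eq_bigr => i _; rewrite hv; ring.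
have hq : qf z = qf y - t * (lam * B) - t * lam * B + t ^+ 2 * lam * N.
  rewrite /qf -hsw.
  transitivity (\sum_i (y i * Pv y i - t * (v i * Pv y i) - t * lam * (v i * y i)
       + t ^+ 2 * lam * v i ^+ 2)).
    by apply: eq_bigr => i _; rewrite hz /z; ring.
  by rewrite big_split /= sumrB sumrB -!mulr_sumr.
have hp := psd z.
have hN0 : N != 0 by rewrite gt_eqF.
have e1 : t * B = B ^+ 2 / N by rewrite /t; field.
have e2 : t ^+ 2 * N = B ^+ 2 / N by rewrite /t; field.
have e3 : N * (qf y - lam * (B ^+ 2 / N)) = N * qf y - lam * B ^+ 2 by field.
have : 0 <= N * (qf y - lam * (B ^+ 2 / N)).
  apply: mulr_ge0; first exact: ltW.
  have -> : qf y - lam * (B ^+ 2 / N) = qf z by rewrite hq /t; field.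
  exact: hp.
rewrite e3; lra.
Qed.

Lemma sum_delta (x : 'I_n -> R) i : \sum_j (i == j)%:R * x j = x i.
Proof.
rewrite (bigD1 i) //= eqxx mul1r big1 ?addr0 // => j /negbTE.
by rewrite eq_sym => ->; rewrite mul0r.
Qed.

Lemma abs_main (mu : R) (v : 'I_n -> R) (S : {set 'I_n}) :
  (forall i, \sum_j (A i j / (s i * s j) - s i * s j / W) * v j = mu * v i) ->
  0 < mu -> (forall i, (i \in S) = (0 <= v i)) -> 0 < \sum_i v i ^+ 2 ->
  let b := fun i => (i \in S)%:R : R in
  let VS := \sum_i s i ^+ 2 * b i in
  let T := \sum_i s i * `|v i| in
  4 * (VS * (W - VS)) * (\sum_i v i ^+ 2) < (mu + 1) * T ^+ 2 * W ->
  0 < \sum_i b i * (\sum_j A i j * b j) - VS ^+ 2 / W.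
Proof.
move=> heig hmu hS hN b VS T hyp.
set N := \sum_i v i ^+ 2 in hN hyp.
have hPv : forall i, Pv v i = (mu + 1) * v i.
  move=> i; rewrite /Pv /PP.
  under eq_bigr => j _ do rewrite mulrDl.
  by rewrite big_split /= heig sum_delta mulrDl mul1r.
have hPs : forall i, Pv s i = s i.
  move=> i; rewrite Pv_expand.
  under eq_bigr => j _ do rewrite divff ?sneq // mulr1.
  rewrite -hd.
  under eq_bigr => j _ do rewrite -expr2.
  have := sneq i; have := Wneq => h1 h2; field; by rewrite h1 h2.
have horth : \sum_i s i * v i = 0.
  have := Pv_swap s v.
  under eq_bigr => i _ do rewrite hPv.
  under [X in _ = X -> _]eq_bigr => i _ do rewrite hPs.
  have -> : \sum_i s i * ((mu + 1) * v i) = (mu + 1) * \sum_i s i * v i.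
    by rewrite mulr_sumr; apply: eq_bigr => i _; ring.
  have -> : \sum_i v i * s i = \sum_i s i * v i by apply: eq_bigr => i _; ring.
  move=> h.
  have : mu * \sum_i s i * v i = 0 by lra.
  by move/eqP; rewrite mulf_eq0 gt_eqF //= => /eqP.
have hbb : forall i, b i ^+ 2 = b i by move=> i; rewrite /b; case: (i \in S) => /=; rewrite ?mulr1n ?mulr0n ?expr1n // expr2 mulr0.
pose y := fun i => s i * (W * b i - VS).
pose a := fun i => \sum_j A i j * b j.
have hsy : \sum_j s j * y j = 0.
  transitivity (W * (\sum_j s j ^+ 2 * b j) - VS * W); last by rewrite -/VS; ring.
  rewrite [W * _]mulr_sumr [VS * _]mulr_sumr -sumrB; apply: eq_bigr => j _; rewrite /y; ring.
have hin : forall i, \sum_j A i j * (y j / s j) = W * a i - VS * s i ^+ 2.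
  move=> i; rewrite hd /a !mulr_sumr -sumrB; apply: eq_bigr => j _; rewrite /y.
  have := sneq j => hj; field; exact hj.
have hqy : qf y = W ^+ 2 * (\sum_i b i * a i) + W ^+ 2 * VS - 2 * W * VS ^+ 2.
  rewrite /qf.
  transitivity (\sum_i (W ^+ 2 * (b i * a i) - W * VS * a i + (W ^+ 2 - 3 * W * VS) * (s i ^+ 2 * b i)
       + 2 * VS ^+ 2 * s i ^+ 2)).
    apply: eq_bigr => i _; rewrite Pv_expand hin hsy /y.
    have := sneq i; have := Wneq => h1 h2.
    rewrite /b; case: (i \in S) => /=; rewrite ?mulr1n ?mulr0n; field; by rewrite h1 h2.
  rewrite big_split /= big_split /= sumrB -!mulr_sumr.
  have -> : \sum_i a i = VS by rewrite /a sumA_r.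
  rewrite -/VS; ring.
pose Bs := \sum_i s i * v i * b i.
have hvy : \sum_i v i * y i = W * Bs.
  transitivity (W * Bs - VS * \sum_i s i * v i); last by rewrite horth; ring.
  rewrite [W * _]mulr_sumr [VS * _]mulr_sumr -sumrB; apply: eq_bigr => i _; rewrite /y; ring.
have hT : T = 2 * Bs.
  transitivity (2 * Bs - \sum_i s i * v i); last by rewrite horth; ring.
  rewrite /T [2 * _]mulr_sumr -sumrB; apply: eq_bigr => i _.
  rewrite /b hS; case: (lerP 0 (v i)) => h /=.
    by rewrite ger0_norm // mulr1n; ring.
  by rewrite ltr0_norm // mulr0n; ring.
have hcs := CS y hPv hN.
rewrite hvy hqy in hcs.
rewrite hT in hyp.
change (0 < \sum_i b i * a i - VS ^+ 2 / W).
set Qa := \sum_i b i * a i in hcs *.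
have hNW : 0 < N * W ^+ 2 by rewrite mulr_gt0 // exprn_gt0.
rewrite -(pmulr_rgt0 _ hNW).
have -> : N * W ^+ 2 * (Qa - VS ^+ 2 / W) =
   N * (W ^+ 2 * Qa + W ^+ 2 * VS - 2 * W * VS ^+ 2) - W * (VS * (W - VS) * N).
  by field; exact Wneq.
have hw : W * (4 * (VS * (W - VS)) * N) < W * ((mu + 1) * (2 * Bs) ^+ 2 * W).
  by rewrite ltr_pM2l.
have e1 : W * ((mu + 1) * (2 * Bs) ^+ 2 * W) = 4 * ((mu + 1) * (W * Bs) ^+ 2) by ring.
rewrite e1 in hw.
have E : W * (4 * (VS * (W - VS)) * N) = 4 * (W * (VS * (W - VS) * N)) by ring.
rewrite E in hw.
move: hw hcs; rewrite -/N.
generalize (W * (VS * (W - VS) * N)) ((mu + 1) * (W * Bs) ^+ 2)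
  (N * (W ^+ 2 * Qa + W ^+ 2 * VS - 2 * W * VS ^+ 2)) => X1 X2 X3.
lra.
Qed.
End Abs.
Lemma modmx_entry (R : rcfType) (n : nat) (e : rel 'I_n) i j :
  modmx R e i j = adjmx R e i j / (Num.sqrt (deg R e i) * Num.sqrt (deg R e j))
     - Num.sqrt (deg R e i) * Num.sqrt (deg R e j) / volV R e.
Proof.
have hD : Dmhalf R e = diag_mx (\row_k (Num.sqrt (deg R e k))^-1).
  apply/matrixP => a b; rewrite !mxE; case: (a =P b) => [->|_] /=; by rewrite ?mulr1n ?mulr0n.
rewrite /modmx hD mul_mx_diag mul_diag_mx !mxE big_ord1 !mxE invfM; ring.
Qed.

Lemma deg_ge0 (R : rcfType) (n : nat) (e : rel 'I_n) i : 0 <= deg R e i.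
Proof. by apply: sumr_ge0 => j _; rewrite mxE ler0n. Qed.

Lemma volV_sum (R : rcfType) (n : nat) (e : rel 'I_n) :
  volV R e = \sum_i Num.sqrt (deg R e i) ^+ 2.
Proof.
rewrite /volV /vol; under eq_bigl => i do rewrite in_setT.
by apply: eq_bigr => i _; rewrite sqr_sqrtr // deg_ge0.
Qed.

Lemma vol_sum (R : rcfType) (n : nat) (e : rel 'I_n) (S : {set 'I_n}) :
  vol R e S = \sum_i Num.sqrt (deg R e i) ^+ 2 * (i \in S)%:R.
Proof.
rewrite /vol big_mkcond /=; apply: eq_bigr => i _.
by rewrite sqr_sqrtr ?deg_ge0 //; case: (i \in S); rewrite ?mulr1 ?mulr0.
Qed.

Lemma sum_pos (R : rcfType) (n : nat) (f : 'I_n -> R) i :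
  (forall j, 0 <= f j) -> 0 < f i -> 0 < \sum_j f j.
Proof.
move=> h hi; apply: (lt_le_trans hi); rewrite (bigD1 i) //= lerDl.
by apply: sumr_ge0.
Qed.

Theorem theorem5p2 (R : rcfType) (n : nat) (e : rel 'I_n)
  (hG : simple_connected e)
  (v : 'cV[R]_n) (mu : R)
  (hv : v != 0) (heig : modmx R e *m v = mu *: v) (hmu : 0 < mu) :
  let S := [set i | 0 <= v i 0] in
  4 * (vol R e S * vol R e (~: S)) / (volV R e) ^+ 2 / (costheta e v) ^+ 2 < mu + 1 ->
  0 < modularity R e S.
Proof.
move=> S hyp.
case: hG => hsym [hirr hconn].
pose A := fun i j => adjmx R e i j.
pose s := fun i => Num.sqrt (deg R e i).
have hAsym : forall i j, A i j = A j i by move=> i j; rewrite /A !mxE hsym.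
have hA0 : forall i j, 0 <= A i j by move=> i j; rewrite /A mxE ler0n.
have hd : forall i, s i ^+ 2 = \sum_j A i j by move=> i; rewrite /s sqr_sqrtr ?deg_ge0.
have hv' : exists i, v i 0 != 0.
  case: (pickP (fun i => v i 0 != 0)) => [i hi|h]; first by exists i.
  exfalso; move/eqP: hv; apply; apply/matrixP => i k.
  by rewrite ord1 mxE; move/negbFE: (h i) => /eqP.
have hN : 0 < \sum_i v i 0 ^+ 2.
  case: hv' => i hi; apply: (@sum_pos _ _ _ i) => [j|]; first exact: sqr_ge0.
  by rewrite lt0r sqr_ge0 andbT sqrf_eq0.
have hdeg : forall i, 0 < deg R e i.
  case: (ltnP 1 n) => hn.
  - move=> i.
    pose o0 := Ordinal (ltn_trans (ltn0Sn 0) hn).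
    pose o1 := Ordinal hn.
    pose j := if i == o0 then o1 else o0.
    have hji : j != i.
      rewrite /j; case: ifP => [/eqP ->|/eqP h]; first by apply/eqP => /(congr1 val).
      by rewrite eq_sym; apply/eqP.
    move: (hconn i j) => /connectP [p hp hl].
    case: p hp hl => [|k p] /=; first by move=> _ hl; rewrite hl eqxx in hji.
    move=> /andP [hik _] _.
    apply: (@sum_pos _ _ _ k) => [l|]; first by rewrite mxE ler0n.
    by rewrite mxE hik.
  - exfalso.
    have heq : forall a b : 'I_n, a = b.
      move=> a b; apply: val_inj => /=; have := ltn_ord a; have := ltn_ord b; lia.
    have hdeg0 : forall i, deg R e i = 0.
      by move=> i; apply: big1 => j _; rewrite (heq j i) mxE hirr.
    have hM : modmx R e *m v = 0.
      apply/matrixP => i k; rewrite !mxE; apply: big1 => j _.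
      by rewrite modmx_entry !hdeg0 sqrtr0 !mul0r invr0 !mulr0 subr0 mul0r.
    have : mu *: v == 0 by rewrite -heig hM.
    by rewrite scaler_eq0 (gt_eqF hmu) /= (negbTE hv).
have hs : forall i, 0 < s i by move=> i; rewrite /s sqrtr_gt0.
have hW : 0 < \sum_i s i ^+ 2.
  case: hv' => i _; apply: (@sum_pos _ _ _ i) => [j|]; first exact: sqr_ge0.
  by rewrite exprn_gt0.
have hWv : volV R e = \sum_i s i ^+ 2 := volV_sum R e.
have heig' : forall i, \sum_j (A i j / (s i * s j) - s i * s j / (\sum_k s k ^+ 2)) * v j 0
     = mu * v i 0.
  move=> i; have := congr1 (fun M : 'M[R]_(n,1) => M i 0) heig; rewrite /= !mxE -hWv => <-.
  by apply: eq_bigr => j _; rewrite modmx_entry.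
have hS : forall i, (i \in S) = (0 <= v i 0) by move=> i; rewrite inE.
have key := @abs_main R n A s hAsym hA0 hs hd hW mu (fun i => v i 0) S heig' hmu hS hN.
rewrite /= in key.
have hmod : ((charvec R S)^T *m adjmx R e *m charvec R S) 0 0 =
    \sum_i (i \in S)%:R * \sum_j A i j * (j \in S)%:R.
  rewrite !mxE; under eq_bigr => j _ do rewrite !mxE mulr_suml.
  rewrite exchange_big /=; apply: eq_bigr => i _; rewrite mulr_sumr; apply: eq_bigr => j _.
  rewrite /A !mxE; ring.
rewrite /modularity hmod vol_sum hWv.
apply: key.
have hC : vol R e (~: S) = \sum_i s i ^+ 2 - \sum_i s i ^+ 2 * (i \in S)%:R.
  rewrite vol_sum -sumrB; apply: eq_bigr => i _; rewrite in_setC.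
  by rewrite /s; case: (i \in S) => /=; rewrite ?mulr1n ?mulr0n; ring.
pose T := \sum_i s i * `|v i 0|.
have hT : 0 < T.
  case: hv' => i hi; apply: (@sum_pos _ _ _ i) => [j|].
    by rewrite mulr_ge0 ?normr_ge0 // ltW.
  by rewrite mulr_gt0 // normr_gt0.
have hc : costheta e v = T / (Num.sqrt (\sum_i v i 0 ^+ 2) * Num.sqrt (\sum_i s i ^+ 2)).
  rewrite /costheta /norm2; congr (_ / (_ * Num.sqrt _)).
    by rewrite mxE; apply: eq_bigr => j _; rewrite !mxE.
  by apply: eq_bigr => j _; rewrite mxE.
rewrite hc expr_div_n exprMn !sqr_sqrtr ?ltW // vol_sum hC hWv in hyp.
set N := \sum_i v i 0 ^+ 2 in hN hyp *.
set W := \sum_i s i ^+ 2 in hW hyp *.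
set VS := \sum_i s i ^+ 2 * (i \in S)%:R in hyp *.
have hT0 : T != 0 by rewrite gt_eqF.
have hW0 : W != 0 by rewrite gt_eqF.
have hN0 : N != 0 by rewrite gt_eqF.
have E : 4 * (VS * (W - VS)) / W ^+ 2 / (T ^+ 2 / (N * W)) =
   (4 * (VS * (W - VS)) * N) / (T ^+ 2 * W) by field; rewrite hT0 hW0 hN0.
rewrite E ltr_pdivrMr ?mulr_gt0 ?exprn_gt0 // in hyp.
apply: (lt_le_trans hyp); rewrite mulrA; exact: lexx.
Qed.
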